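(* Let $S$ be the surface of revolution $\boldsymbol{x}(u,v)=(p(u)\cos v,\,p(u)\sin v,\,q(u))$ with nowhere vanishing Gaussian curvature, and suppose $\Delta^{II}\boldsymbol{x}=A\boldsymbol{x}$ for a real $3\times3$ matrix $A=(a_{ij})$. Then $A=\mathrm{diag}(\lambda,\lambda,\mu)$ for some real numbers $\lambda,\mu$, i.e. $a_{12}=a_{13}=a_{21}=a_{23}=a_{31}=a_{32}=0$ and $a_{11}=a_{22}$. Moreover $\lambda$ and $\mu$ are not both zero, i.e. there is no such surface with $\Delta^{II}\boldsymbol{x}=0$.
   Context: Here $p,q$ are smooth on an interval $(a,b)$, $p>0$, $(p')^{2}+(q')^{2}=1$, $v\in[0,2\pi)$. Let $\boldsymbol{n}$ be the unit normal $\frac{\boldsymbol{x}_{u}\times\boldsymbol{x}_{v}}{\|\boldsymbol{x}_{u}\times\boldsymbol{x}_{v}\|}$ and $II=b_{ij}du^{i}du^{j}$ the second fundamental form, $b_{ij}=\langle \boldsymbol{x}_{u^iu^j},\boldsymbol{n}\rangle$, $(u^1,u^2)=(u,v)$; nonvanishing Gaussian curvature makes $(b_{ij})$ invertible with inverse $(b^{ij})$, and $b=\det(b_{ij})$. For smooth $f$, $\Delta^{II}f=-\frac{1}{\sqrt{|b|}}\partial_{u^{i}}\big(\sqrt{|b|}\,b^{ij}\partial_{u^{j}}f\big)$, and $\Delta^{II}\boldsymbol{x}$ is applied componentwise to the coordinate functions $(x_1,x_2,x_3)$ of $\boldsymbol{x}$. *)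

(* Defs.v *)
From Stdlib Require Import Reals.
From Coquelicot Require Import Coquelicot.
Open Scope R_scope.

(* Vectors of R^3 are coordinate functions nat -> R (coordinates 0,1,2). *)
Definition vec3 := nat -> R.
Definition dot3 (x y : vec3) : R := x 0%nat * y 0%nat + x 1%nat * y 1%nat + x 2%nat * y 2%nat.
Definition cross3 (x y : vec3) : vec3 := fun i =>
  match i with
  | 0%nat => x 1%nat * y 2%nat - x 2%nat * y 1%nat
  | 1%nat => x 2%nat * y 0%nat - x 0%nat * y 2%nat
  | _ => x 0%nat * y 1%nat - x 1%nat * y 0%nat
  end.
Definition norm3 (x : vec3) : R := sqrt (dot3 x x).

(* A parametrized surface: coordinate i of x(u,v) is  x i u v. *)
Definition surf := nat -> R -> R -> R.

(* partial derivative w.r.t. u^k, with (u^0,u^1) = (u,v) *)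
Definition pd (k : nat) (f : R -> R -> R) : R -> R -> R := fun u v =>
  match k with
  | 0%nat => Derive (fun s => f s v) u
  | _ => Derive (fun t => f u t) v
  end.

Definition xd (x : surf) (k : nat) (u v : R) : vec3 := fun c => pd k (x c) u v.
Definition xdd (x : surf) (k l : nat) (u v : R) : vec3 := fun c => pd k (pd l (x c)) u v.

Definition unit_normal (x : surf) (u v : R) : vec3 := fun c =>
  cross3 (xd x 0 u v) (xd x 1 u v) c / norm3 (cross3 (xd x 0 u v) (xd x 1 u v)).

Definition fff (x : surf) (i j : nat) (u v : R) : R := dot3 (xd x i u v) (xd x j u v).
Definition sff (x : surf) (i j : nat) (u v : R) : R := dot3 (xdd x i j u v) (unit_normal x u v).

Definition det2 (m : nat -> nat -> R) : R := m 0%nat 0%nat * m 1%nat 1%nat - m 0%nat 1%nat * m 1%nat 0%nat.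

Definition sff_det (x : surf) (u v : R) : R := det2 (fun i j => sff x i j u v).

Definition gauss_curv (x : surf) (u v : R) : R :=
  sff_det x u v / det2 (fun i j => fff x i j u v).

Definition sff_inv (x : surf) (i j : nat) (u v : R) : R :=
  match i, j with
  | 0%nat, 0%nat => sff x 1 1 u v / sff_det x u v
  | 1%nat, 1%nat => sff x 0 0 u v / sff_det x u v
  | _, _ => - sff x i j u v / sff_det x u v
  end.

Definition LapII (x : surf) (f : R -> R -> R) (u v : R) : R :=
  let sb := fun s t => sqrt (Rabs (sff_det x s t)) in
  - / sb u v *
   (pd 0 (fun s t => sb s t * (sff_inv x 0 0 s t * pd 0 f s t + sff_inv x 0 1 s t * pd 1 f s t)) u v
  + pd 1 (fun s t => sb s t * (sff_inv x 1 0 s t * pd 0 f s t + sff_inv x 1 1 s t * pd 1 f s t)) u v).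

Definition rev_surf (p q : R -> R) : surf := fun c u v =>
  match c with
  | 0%nat => p u * cos v
  | 1%nat => p u * sin v
  | _ => q u
  end.

Definition smooth_on (a b : R) (f : R -> R) : Prop :=
  forall (n : nat) (u : R), a < u < b -> ex_derive_n f n u.

(* Main.v *)
Require Import Defs.
From Stdlib Require Import Reals Lra FunctionalExtensionality.
From Coquelicot Require Import Coquelicot.
Open Scope R_scope.

Lemma G0 (g h : R -> R) : pd 0 (fun s t => g s * h t) = fun s t => Derive g s * h t.
Proof. do 2 (apply functional_extensionality; intro). unfold pd. apply Derive_scal_l. Qed.
Lemma G1 (g h : R -> R) : pd 1 (fun s t => g s * h t) = fun s t => g s * Derive h t.
Proof. do 2 (apply functional_extensionality; intro). unfold pd. apply Derive_scal. Qed.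
Lemma C0 (g : R -> R) : pd 0 (fun s t => g s) = fun s t => Derive g s.
Proof. reflexivity. Qed.
Lemma C1 (g : R -> R) : pd 1 (fun s t => g s) = fun s t => 0.
Proof. do 2 (apply functional_extensionality; intro). unfold pd. apply Derive_const. Qed.
Lemma Dcos : Derive cos = fun t => - sin t.
Proof. apply functional_extensionality; intro. apply is_derive_unique, is_derive_cos. Qed.
Lemma Dsin : Derive sin = cos.
Proof. apply functional_extensionality; intro. apply is_derive_unique, is_derive_sin. Qed.
Lemma Dnsin : Derive (fun t => - sin t) = fun t => - cos t.
Proof. apply functional_extensionality; intro. rewrite Derive_opp, Dsin. reflexivity. Qed.
Lemma Dncos : Derive (fun t => - cos t) = fun t => sin t.
Proof. apply functional_extensionality; intro. rewrite Derive_opp, Dcos. ring. Qed.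

Lemma rs0 p q : rev_surf p q 0%nat = fun s t => p s * cos t. Proof. reflexivity. Qed.
Lemma rs1 p q : rev_surf p q 1%nat = fun s t => p s * sin t. Proof. reflexivity. Qed.
Lemma rs2 p q : rev_surf p q 2%nat = fun s t => q s. Proof. reflexivity. Qed.

Ltac pdsimp := repeat first [rewrite rs0 | rewrite rs1 | rewrite rs2 | rewrite G0 | rewrite G1 | rewrite C0 | rewrite C1 | rewrite Dcos | rewrite Dsin | rewrite Dnsin | rewrite Dncos | rewrite Derive_const].

Lemma normal_vals p q s t : 0 < p s -> Derive p s ^ 2 + Derive q s ^ 2 = 1 ->
  unit_normal (rev_surf p q) s t 0%nat = - (Derive q s * cos t) /\
  unit_normal (rev_surf p q) s t 1%nat = - (Derive q s * sin t) /\
  unit_normal (rev_surf p q) s t 2%nat = Derive p s.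
Proof.
  intros Hp Hu.
  assert (Hn : norm3 (cross3 (xd (rev_surf p q) 0 s t) (xd (rev_surf p q) 1 s t)) = p s).
  { unfold norm3, dot3, cross3, xd. cbv beta iota. pdsimp.
    pose proof (sin2_cos2 t). unfold Rsqr in *.
    apply eq_trans with (sqrt (p s ^ 2)); [f_equal | apply sqrt_pow2; lra].
    transitivity (p s ^ 2 * (Derive q s ^ 2 * (sin t * sin t + cos t * cos t) + Derive p s ^2 * (sin t * sin t + cos t * cos t)^2)).
    ring. rewrite H. replace (Derive p s ^2) with (1 - Derive q s^2) by lra. ring. }
  unfold unit_normal. rewrite Hn. unfold cross3, xd. cbv beta iota. pdsimp.
  pose proof (sin2_cos2 t). unfold Rsqr in *.
  repeat split.
  - field. lra.
  - field. lra.
  - replace (Derive p s * cos t * (p s * cos t) - Derive p s * sin t * (p s * - sin t)) with (Derive p s * p s * (sin t * sin t + cos t * cos t)) by ring.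
    rewrite H. field. lra.
Qed.

Definition kk (p q : R -> R) s := Derive p s * Derive (Derive q) s - Derive (Derive p) s * Derive q s.

Lemma sff_vals p q s t : 0 < p s -> Derive p s ^ 2 + Derive q s ^ 2 = 1 ->
  sff (rev_surf p q) 0%nat 0%nat s t = kk p q s /\
  sff (rev_surf p q) 0%nat 1%nat s t = 0 /\
  sff (rev_surf p q) 1%nat 0%nat s t = 0 /\
  sff (rev_surf p q) 1%nat 1%nat s t = p s * Derive q s.
Proof.
  intros Hp Hu. destruct (normal_vals p q s t Hp Hu) as [N0 [N1 N2]].
  pose proof (sin2_cos2 t) as H. unfold Rsqr in H.
  unfold sff, dot3. rewrite N0, N1, N2. unfold xdd. pdsimp. unfold kk.
  repeat split.
  - transitivity (Derive p s * Derive (Derive q) s - Derive (Derive p) s * Derive q s * (sin t * sin t + cos t * cos t)); [ring|]. rewrite H; ring.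
  - ring.
  - ring.
  - transitivity (p s * Derive q s * (sin t * sin t + cos t * cos t)); [ring|]. rewrite H; ring.
Qed.

Lemma loc_int a b u : a < u < b -> locally u (fun s => a < s < b).
Proof.
  intros [H1 H2].
  assert (Hpos : 0 < Rmin (u - a) (b - u)) by (apply Rmin_pos; lra).
  exists (mkposreal _ Hpos). intros y Hy. simpl in Hy.
  unfold ball in Hy; simpl in Hy; unfold AbsRing_ball, abs, minus, plus, opp in Hy; simpl in Hy.
  destruct (Rabs_def2 _ _ Hy). pose proof (Rmin_l (u-a) (b-u)). pose proof (Rmin_r (u-a) (b-u)). lra.
Qed.

Section S.
Variables (a b : R) (p q : R -> R).
Hypothesis Hp : forall u, a < u < b -> 0 < p u.
Hypothesis Hu : forall u, a < u < b -> (Derive p u) ^ 2 + (Derive q u) ^ 2 = 1.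

Definition be s := kk p q s * (p s * Derive q s).
Definition ww s := sqrt (Rabs (be s)).
Definition H1 s := ww s * ((p s * Derive q s) / be s * Derive p s).
Definition H3 s := ww s * ((p s * Derive q s) / be s * Derive q s).
Definition Cc s := ww s * (kk p q s / be s * p s).
Definition FF u := - / ww u * (Derive H1 u - Cc u).
Definition GG u := - / ww u * Derive H3 u.

Lemma det_val s t : a < s < b -> sff_det (rev_surf p q) s t = be s.
Proof. intros Hs. destruct (sff_vals p q s t (Hp s Hs) (Hu s Hs)) as [E0 [E1 [E2 E3]]].
  unfold sff_det, det2. rewrite E0, E1, E2, E3. unfold be. ring. Qed.

Lemma inv_vals s t : a < s < b ->
  sff_inv (rev_surf p q) 0%nat 0%nat s t = p s * Derive q s / be s /\
  sff_inv (rev_surf p q) 0%nat 1%nat s t = 0 /\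
  sff_inv (rev_surf p q) 1%nat 0%nat s t = 0 /\
  sff_inv (rev_surf p q) 1%nat 1%nat s t = kk p q s / be s.
Proof. intros Hs. destruct (sff_vals p q s t (Hp s Hs) (Hu s Hs)) as [E0 [E1 [E2 E3]]].
  unfold sff_inv. rewrite (det_val s t Hs), E0, E1, E2, E3. unfold Rdiv. repeat split; ring. Qed.

Lemma Lap0 u v : a < u < b -> LapII (rev_surf p q) (rev_surf p q 0%nat) u v = cos v * FF u.
Proof.
  intros Hs. unfold LapII. cbv zeta. pdsimp. unfold pd. rewrite (det_val u v Hs).
  rewrite (Derive_ext_loc _ (fun s => H1 s * cos v)).
  2:{ eapply filter_imp; [|apply (loc_int a b u Hs)]. intros s Hs'. cbv beta in Hs' |- *.
      destruct (inv_vals s v Hs') as [I0 [I1 [I2 I3]]]. rewrite I0, I1, (det_val s v Hs'). unfold H1, ww. ring. }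
  match goal with |- context [Derive ?f v] => rewrite (Derive_ext f (fun t => Cc u * - sin t)) end.
  2:{ intros t. cbv beta. destruct (inv_vals u t Hs) as [I0 [I1 [I2 I3]]]. rewrite I2, I3, (det_val u t Hs). unfold Cc, ww. ring. }
  rewrite Derive_scal_l, Derive_scal, Dnsin. unfold FF, ww. ring.
Qed.

Lemma Lap1 u v : a < u < b -> LapII (rev_surf p q) (rev_surf p q 1%nat) u v = sin v * FF u.
Proof.
  intros Hs. unfold LapII. cbv zeta. pdsimp. unfold pd. rewrite (det_val u v Hs).
  rewrite (Derive_ext_loc _ (fun s => H1 s * sin v)).
  2:{ eapply filter_imp; [|apply (loc_int a b u Hs)]. intros s Hs'. cbv beta in Hs' |- *.
      destruct (inv_vals s v Hs') as [I0 [I1 [I2 I3]]]. rewrite I0, I1, (det_val s v Hs'). unfold H1, ww. ring. }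
  match goal with |- context [Derive ?f v] => rewrite (Derive_ext f (fun t => Cc u * cos t)) end.
  2:{ intros t. cbv beta. destruct (inv_vals u t Hs) as [I0 [I1 [I2 I3]]]. rewrite I2, I3, (det_val u t Hs). unfold Cc, ww. ring. }
  rewrite Derive_scal_l, Derive_scal, Dcos. unfold FF, ww. ring.
Qed.

Lemma Lap2 u v : a < u < b -> LapII (rev_surf p q) (rev_surf p q 2%nat) u v = GG u.
Proof.
  intros Hs. unfold LapII. cbv zeta. pdsimp. unfold pd. rewrite (det_val u v Hs).
  rewrite (Derive_ext_loc _ H3).
  2:{ eapply filter_imp; [|apply (loc_int a b u Hs)]. intros s Hs'. cbv beta in Hs' |- *.
      destruct (inv_vals s v Hs') as [I0 [I1 [I2 I3]]]. rewrite I0, I1, (det_val s v Hs'). unfold H3, ww. ring. }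
  match goal with |- context [Derive ?f v] => rewrite (Derive_ext f (fun t => 0)) end.
  2:{ intros t. cbv beta. destruct (inv_vals u t Hs) as [I0 [I1 [I2 I3]]]. rewrite I2. ring. }
  rewrite Derive_const. unfold GG, ww. ring.
Qed.
End S.

Lemma key a b p q u0 :
  (forall u, a < u < b -> 0 < p u) ->
  (forall u, a < u < b -> (Derive p u) ^ 2 + (Derive q u) ^ 2 = 1) ->
  (forall s, a < s < b -> be p q s <> 0) ->
  a < u0 < b ->
  ex_derive p u0 -> ex_derive (Derive p) u0 -> ex_derive (Derive (Derive p)) u0 ->
  ex_derive q u0 -> ex_derive (Derive q) u0 -> ex_derive (Derive (Derive q)) u0 ->
  FF p q u0 = 0 -> GG p q u0 = 0 -> False.
Proof.
  intros Hp Hu Hb Hu0 D0 D1 D2 E0 E1 E2 HF HG.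
  assert (Hbe : ex_derive (be p q) u0).
  { unfold be, kk. auto_derive. repeat split; assumption. }
  assert (Hw : ex_derive (ww p q) u0).
  { destruct Hbe as [d Hd]. eexists. unfold ww. apply is_derive_sqrt.
    apply is_derive_Rabs; [exact Hd | apply Hb; auto]. apply Rabs_pos_lt, Hb; auto. }
  assert (Hnz : forall s, a < s < b -> kk p q s <> 0 /\ p s <> 0 /\ Derive q s <> 0).
  { intros s Hs. pose proof (Hb s Hs) as B. unfold be in B.
    repeat split; intro Z; apply B; rewrite Z; ring. }
  destruct (Hnz u0 Hu0) as [K0 [P0 Q0]].
  assert (Wpos : 0 < ww p q u0).
  { unfold ww. apply sqrt_lt_R0, Rabs_pos_lt, Hb; auto. }
  assert (H3d : ex_derive (H3 p q) u0).
  { unfold H3. apply ex_derive_mult; [exact Hw|]. apply ex_derive_mult; [|exact E1].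
    apply (ex_derive_div (fun y => p y * Derive q y) (be p q)); auto.
    apply ex_derive_mult; auto. }
  assert (DH3 : Derive (H3 p q) u0 = 0).
  { unfold GG in HG. apply Rmult_integral in HG. destruct HG as [HG|HG]; auto.
    exfalso. assert (/ ww p q u0 <> 0) by (apply Rinv_neq_0_compat; lra). lra. }
  assert (DH1 : Derive (H1 p q) u0 = Cc p q u0).
  { unfold FF in HF. apply Rmult_integral in HF. destruct HF as [HF|HF]; [|lra].
    exfalso. assert (/ ww p q u0 <> 0) by (apply Rinv_neq_0_compat; lra). lra. }
  rewrite (Derive_ext_loc _ (fun s => H3 p q s * (Derive p s / Derive q s))) in DH1.
  2:{ eapply filter_imp; [|apply (loc_int a b u0 Hu0)]. intros s Hs. cbv beta in Hs |- *.
      destruct (Hnz s Hs) as [K1 [P1 Q1]]. pose proof (Hb s Hs).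
      unfold H1, H3. field. auto. }
  rewrite Derive_mult, DH3, Derive_div in DH1; auto.
  2:{ apply ex_derive_div; auto. }
  unfold H3, Cc, be, kk in DH1. unfold kk in K0.
  match type of DH1 with ?L = ?Rr =>
    assert (HL : @eq R L (- (ww p q u0 / Derive q u0))) by (field; auto);
    assert (HR : @eq R Rr (ww p q u0 / Derive q u0)) by (field; auto) end.
  assert (ww p q u0 / Derive q u0 = 0) by lra.
  unfold Rdiv in H. apply Rmult_integral in H. destruct H as [H|H]; [lra|].
  apply Rinv_neq_0_compat in Q0. auto.
Qed.

Theorem mainTheorem2 (a b : R) (p q : R -> R) (A : nat -> nat -> R) :
  a < b ->
  smooth_on a b p -> smooth_on a b q ->
  (forall u, a < u < b -> 0 < p u) ->
  (forall u, a < u < b -> (Derive p u) ^ 2 + (Derive q u) ^ 2 = 1) ->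
  (forall u v, a < u < b -> 0 <= v < 2 * PI -> gauss_curv (rev_surf p q) u v <> 0) ->
  (forall (i : nat) u v, (i < 3)%nat -> a < u < b -> 0 <= v < 2 * PI ->
     LapII (rev_surf p q) (rev_surf p q i) u v =
     A i 0%nat * rev_surf p q 0%nat u v + A i 1%nat * rev_surf p q 1%nat u v
     + A i 2%nat * rev_surf p q 2%nat u v) ->
  exists lam mu : R,
    A 0%nat 0%nat = lam /\ A 1%nat 1%nat = lam /\ A 2%nat 2%nat = mu /\
    A 0%nat 1%nat = 0 /\ A 0%nat 2%nat = 0 /\ A 1%nat 0%nat = 0 /\
    A 1%nat 2%nat = 0 /\ A 2%nat 0%nat = 0 /\ A 2%nat 1%nat = 0 /\
    ~ (lam = 0 /\ mu = 0).
Proof.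
  intros Hab Sp Sq Hp Hu Hk HL.
  assert (Hb : forall s, a < s < b -> be p q s <> 0).
  { intros s Hs Z. apply (Hk s 0 Hs). pose proof PI_RGT_0; lra.
    unfold gauss_curv. rewrite (det_val a b p q Hp Hu s 0 Hs), Z. unfold Rdiv. ring. }
  pose proof PI_RGT_0 as HPI.
  assert (V0 : 0 <= 0 < 2 * PI) by lra.
  assert (V1 : 0 <= PI/2 < 2 * PI) by lra.
  assert (V2 : 0 <= PI < 2 * PI) by lra.
  assert (R0 : forall u v, a < u < b -> 0 <= v < 2 * PI ->
     cos v * FF p q u = A 0%nat 0%nat * (p u * cos v) + A 0%nat 1%nat * (p u * sin v) + A 0%nat 2%nat * q u).
  { intros u v Hs Hv. rewrite <- (Lap0 a b p q Hp Hu u v Hs). apply (HL 0%nat u v); auto. }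
  assert (R1 : forall u v, a < u < b -> 0 <= v < 2 * PI ->
     sin v * FF p q u = A 1%nat 0%nat * (p u * cos v) + A 1%nat 1%nat * (p u * sin v) + A 1%nat 2%nat * q u).
  { intros u v Hs Hv. rewrite <- (Lap1 a b p q Hp Hu u v Hs). apply (HL 1%nat u v); auto. }
  assert (R2 : forall u v, a < u < b -> 0 <= v < 2 * PI ->
     GG p q u = A 2%nat 0%nat * (p u * cos v) + A 2%nat 1%nat * (p u * sin v) + A 2%nat 2%nat * q u).
  { intros u v Hs Hv. rewrite <- (Lap2 a b p q Hp Hu u v Hs). apply (HL 2%nat u v); auto. }
  assert (EQ : forall u, a < u < b ->
     A 0%nat 1%nat * p u = 0 /\ A 0%nat 2%nat * q u = 0 /\ A 1%nat 0%nat * p u = 0 /\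
     A 1%nat 2%nat * q u = 0 /\ A 2%nat 0%nat * p u = 0 /\ A 2%nat 1%nat * p u = 0 /\
     FF p q u = A 0%nat 0%nat * p u /\ FF p q u = A 1%nat 1%nat * p u /\
     GG p q u = A 2%nat 2%nat * q u).
  { intros u Hs.
    pose proof (R0 u 0 Hs V0) as a0. pose proof (R0 u (PI/2) Hs V1) as a1. pose proof (R0 u PI Hs V2) as a2.
    pose proof (R1 u 0 Hs V0) as b0. pose proof (R1 u (PI/2) Hs V1) as b1. pose proof (R1 u PI Hs V2) as b2.
    pose proof (R2 u 0 Hs V0) as c0. pose proof (R2 u (PI/2) Hs V1) as c1. pose proof (R2 u PI Hs V2) as c2.
    rewrite cos_0, sin_0 in a0, b0, c0. rewrite cos_PI2, sin_PI2 in a1, b1, c1. rewrite cos_PI, sin_PI in a2, b2, c2.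
    repeat split; nra. }
  set (u0 := (a + b) / 2).
  assert (Hu0 : a < u0 < b) by (unfold u0; lra).
  assert (Q1nz : Derive q u0 <> 0).
  { intro Z. apply (Hb u0 Hu0). unfold be. rewrite Z. ring. }
  assert (Hq : exists u1, a < u1 < b /\ q u1 <> 0).
  { destruct (Classical_Prop.classic (exists u1, a < u1 < b /\ q u1 <> 0)) as [H|H]; auto.
    exfalso. apply Q1nz. rewrite (Derive_ext_loc _ (fun _ => 0)). apply Derive_const.
    eapply filter_imp; [|apply (loc_int a b u0 Hu0)]. intros s Hs. cbv beta in Hs |- *.
    destruct (Req_dec (q s) 0); auto. exfalso. apply H. eauto. }
  destruct Hq as [u1 [Hu1 Hq1]].
  assert (Hpnz : forall u, a < u < b -> p u <> 0) by (intros u Hs; pose proof (Hp u Hs); lra).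
  destruct (EQ u1 Hu1) as [e1 [e2 [e3 [e4 [e5 [e6 [e7 [e8 e9]]]]]]]].
  pose proof (Hpnz u1 Hu1) as Pn.
  assert (A01 : A 0%nat 1%nat = 0) by (apply Rmult_integral in e1; tauto).
  assert (A02 : A 0%nat 2%nat = 0) by (apply Rmult_integral in e2; tauto).
  assert (A10 : A 1%nat 0%nat = 0) by (apply Rmult_integral in e3; tauto).
  assert (A12 : A 1%nat 2%nat = 0) by (apply Rmult_integral in e4; tauto).
  assert (A20 : A 2%nat 0%nat = 0) by (apply Rmult_integral in e5; tauto).
  assert (A21 : A 2%nat 1%nat = 0) by (apply Rmult_integral in e6; tauto).
  assert (A11 : A 1%nat 1%nat = A 0%nat 0%nat).
  { apply (Rmult_eq_reg_r (p u1)); [lra | auto]. }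
  exists (A 0%nat 0%nat), (A 2%nat 2%nat). repeat split; auto.
  intros [Z1 Z2].
  destruct (EQ u0 Hu0) as [_ [_ [_ [_ [_ [_ [f7 [_ f9]]]]]]]].
  apply (key a b p q u0 Hp Hu Hb Hu0).
  - exact (Sp 1%nat u0 Hu0).
  - exact (Sp 2%nat u0 Hu0).
  - exact (Sp 3%nat u0 Hu0).
  - exact (Sq 1%nat u0 Hu0).
  - exact (Sq 2%nat u0 Hu0).
  - exact (Sq 3%nat u0 Hu0).
  - rewrite f7, Z1. ring.
  - rewrite f9, Z2. ring.
Qed.
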